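(* Let $P,Q,R_0,R_1$ be integers with $P>0$, $Q<0$, $R_0,R_1$ positive integers, and $\gcd(P,Q)=\gcd(R_1,Q)=1$. Let $(R_n)_{n\ge0}$ be given by $R_{n+2}=PR_{n+1}-QR_n$ ($n\ge0$), and let $\alpha,\beta$ be the roots of $x^2-Px+Q$ with $|\alpha|\ge|\beta|$ (here $\alpha>0>\beta$). Then for all positive integers $n,m$ with $n\geq 2$ and $m\leq \lfloor (n+1)/2\rfloor+1$, \[\mathrm{lcm}(R_m,R_{m+1},\dots,R_n)\geq \gcd(R_0,R_1)\left(\frac{R_1+R_0|\beta|}{\gcd(R_0,R_1)}\right)^{\frac{n-1}{2}}\alpha^{\frac{n^2}{4}-\frac{n}{2}-\frac{7}{4}}.\] *)

(* Defs.v *)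
From Stdlib Require Import Reals ZArith List Lia Lra.
Open Scope R_scope.

Definition lcm_range (R : nat -> Z) (m n : nat) : Z :=
  fold_right Z.lcm 1%Z (map R (seq m (S n - m))).

(* Main.v *)
Require Import Defs.
From Stdlib Require Import Reals ZArith List Lia Lra Znumtheory.
Open Scope R_scope.

Fixpoint UU (P Q : Z) (n : nat) : Z :=
  match n with
  | O => 0%Z
  | S O => 1%Z
  | S ((S n'') as n') => (P * UU P Q n' - Q * UU P Q n'')%Z
  end.

Fixpoint NN (g P Q : Z) (k : nat) : Z :=
  match k with
  | O => 1%Z
  | S k' => (g * UU P Q (S k') * NN g P Q k')%Z
  end.

Definition prodR (Rs : nat -> Z) (a k : nat) : Z :=
  fold_right Z.mul 1%Z (map Rs (seq a (S k))).
Definition lcmR (Rs : nat -> Z) (a k : nat) : Z :=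
  fold_right Z.lcm 1%Z (map Rs (seq a (S k))).

Open Scope Z_scope.

Lemma coprime_div a b c : Z.gcd a b = 1 -> (c | a) -> Z.gcd c b = 1.
Proof.
  intros H Hc. apply Z.divide_1_r_nonneg. apply Z.gcd_nonneg.
  rewrite <- H. apply Z.gcd_greatest.
  - eapply Z.divide_trans; [apply Z.gcd_divide_l|exact Hc].
  - apply Z.gcd_divide_r.
Qed.

Lemma R_coprime (P Q : Z) (Rs : nat -> Z)
  (hgPQ : Z.gcd P Q = 1) (hgR1Q : Z.gcd (Rs 1%nat) Q = 1)
  (hrec : forall k : nat, Rs (S (S k)) = P * Rs (S k) - Q * Rs k) :
  forall b, Z.gcd (Rs (S b)) Q = 1.
Proof.
  induction b as [|b IH]; [exact hgR1Q|].
  set (d := Z.gcd (Rs (S (S b))) Q).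
  assert (HdQ : (d | Q)) by apply Z.gcd_divide_r.
  assert (HdR : (d | Rs (S (S b)))) by apply Z.gcd_divide_l.
  assert (HdP : Z.gcd d P = 1).
  { apply (coprime_div Q P d); [rewrite Z.gcd_comm; exact hgPQ| exact HdQ]. }
  assert (H1 : (d | P * Rs (S b))).
  { replace (P * Rs (S b)) with (Rs (S (S b)) + Q * Rs b) by (rewrite hrec; ring).
    apply Z.divide_add_r; [exact HdR| apply Z.divide_mul_l; exact HdQ]. }
  assert (H2 : (d | Rs (S b))) by (eapply Z.gauss; eauto).
  apply Z.divide_1_r_nonneg; [apply Z.gcd_nonneg|].
  rewrite <- IH. apply Z.gcd_greatest; assumption.
Qed.

Lemma R_consec (P Q : Z) (Rs : nat -> Z)
  (hgPQ : Z.gcd P Q = 1) (hgR1Q : Z.gcd (Rs 1%nat) Q = 1)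
  (hrec : forall k : nat, Rs (S (S k)) = P * Rs (S k) - Q * Rs k) :
  forall b, (Z.gcd (Rs b) (Rs (S b)) | Z.gcd (Rs 0%nat) (Rs 1%nat)).
Proof.
  induction b as [|b IH]; [apply Z.divide_refl|].
  set (d := Z.gcd (Rs (S b)) (Rs (S (S b)))).
  assert (H1 : (d | Rs (S b))) by apply Z.gcd_divide_l.
  assert (H2 : (d | Rs (S (S b)))) by apply Z.gcd_divide_r.
  assert (HdQ : Z.gcd d Q = 1).
  { apply (coprime_div (Rs (S b)) Q d); [apply (R_coprime P Q Rs hgPQ hgR1Q hrec)| exact H1]. }
  assert (H3 : (d | Q * Rs b)).
  { replace (Q * Rs b) with (P * Rs (S b) - Rs (S (S b))) by (rewrite hrec; ring).
    apply Z.divide_sub_r; [apply Z.divide_mul_r; exact H1| exact H2]. }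
  assert (H4 : (d | Rs b)) by (eapply Z.gauss; eauto).
  eapply Z.divide_trans; [|exact IH].
  apply Z.gcd_greatest; assumption.
Qed.

Lemma R_ident (P Q : Z) (Rs : nat -> Z)
  (hrec : forall k : nat, Rs (S (S k)) = P * Rs (S k) - Q * Rs k) (a : nat) :
  forall k, Rs (a + S k)%nat = UU P Q (S k) * Rs (S a) - Q * UU P Q k * Rs a.
Proof.
  assert (H : forall k, Rs (a + S k)%nat = UU P Q (S k) * Rs (S a) - Q * UU P Q k * Rs a
        /\ Rs (a + S (S k))%nat = UU P Q (S (S k)) * Rs (S a) - Q * UU P Q (S k) * Rs a).
  { induction k as [|k [IH1 IH2]].
    - split.
      + replace (a + 1)%nat with (S a) by lia.
        change (UU P Q 1) with 1. change (UU P Q 0) with 0. ring.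
      + replace (a + 2)%nat with (S (S a)) by lia. rewrite hrec.
        change (UU P Q 2) with (P * 1 - Q * 0). change (UU P Q 1) with 1. ring.
    - split; [exact IH2|].
      replace (a + S (S (S k)))%nat with (S (S (a + S k))) by lia.
      rewrite hrec.
      replace (S (a + S k)) with (a + S (S k))%nat by lia.
      rewrite IH1, IH2.
      change (UU P Q (S (S (S k)))) with (P * UU P Q (S (S k)) - Q * UU P Q (S k)).
      change (UU P Q (S (S k))) with (P * UU P Q (S k) - Q * UU P Q k). ring. }
  intro k; apply H.
Qed.

Lemma U_pos (P Q : Z) (hP : 0 < P) (hQ : Q < 0) :
  forall k, 1 <= UU P Q (S k) <= UU P Q (S (S k)).
Proof.
  induction k as [|k IH].
  - simpl. lia.
  - destruct IH as [IH1 IH2]. split; [lia|].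
    change (UU P Q (S (S (S k)))) with (P * UU P Q (S (S k)) - Q * UU P Q (S k)).
    nia.
Qed.

Lemma R_pos (P Q : Z) (Rs : nat -> Z) (hP : 0 < P) (hQ : Q < 0)
  (hR0 : 0 < Rs 0%nat) (hR1 : 0 < Rs 1%nat)
  (hrec : forall k : nat, Rs (S (S k)) = P * Rs (S k) - Q * Rs k) :
  forall k, 0 < Rs k /\ 0 < Rs (S k).
Proof.
  induction k as [|k [IH1 IH2]]; [lia|]. split; [exact IH2|].
  rewrite hrec. nia.
Qed.

Lemma R_mono (P Q : Z) (Rs : nat -> Z) (hP : 0 < P) (hQ : Q < 0)
  (hR0 : 0 < Rs 0%nat) (hR1 : 0 < Rs 1%nat)
  (hrec : forall k : nat, Rs (S (S k)) = P * Rs (S k) - Q * Rs k) :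
  forall k, Rs (S k) <= Rs (S (S k)).
Proof.
  intro k. destruct (R_pos P Q Rs hP hQ hR0 hR1 hrec k). rewrite hrec. nia.
Qed.

Lemma gcd_far (P Q : Z) (Rs : nat -> Z) (hP : 0 < P) (hQ : Q < 0)
  (hgPQ : Z.gcd P Q = 1) (hgR1Q : Z.gcd (Rs 1%nat) Q = 1)
  (hrec : forall k : nat, Rs (S (S k)) = P * Rs (S k) - Q * Rs k) (a k : nat) :
  (Z.gcd (Rs a) (Rs (a + S k)%nat) | Z.gcd (Rs 0%nat) (Rs 1%nat) * UU P Q (S k)).
Proof.
  set (d := Z.gcd (Rs a) (Rs (a + S k)%nat)).
  assert (H1 : (d | Rs a)) by apply Z.gcd_divide_l.
  assert (H2 : (d | Rs (a + S k)%nat)) by apply Z.gcd_divide_r.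
  rewrite (R_ident P Q Rs hrec a k) in H2.
  assert (H3 : (d | UU P Q (S k) * Rs (S a))).
  { replace (UU P Q (S k) * Rs (S a)) with
      ((UU P Q (S k) * Rs (S a) - Q * UU P Q k * Rs a) + (Q * UU P Q k) * Rs a) by ring.
    apply Z.divide_add_r; [exact H2| apply Z.divide_mul_r; exact H1]. }
  assert (H4 : (d | UU P Q (S k) * Rs a)) by (apply Z.divide_mul_r; exact H1).
  assert (H5 : (d | Z.gcd (UU P Q (S k) * Rs a) (UU P Q (S k) * Rs (S a))))
    by (apply Z.gcd_greatest; assumption).
  rewrite Z.gcd_mul_mono_l in H5.
  rewrite Z.abs_eq in H5 by (destruct (U_pos P Q hP hQ k); lia).
  eapply Z.divide_trans; [exact H5|].
  rewrite Z.mul_comm. apply Z.mul_divide_mono_r.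
  apply (R_consec P Q Rs hgPQ hgR1Q hrec).
Qed.

Lemma fold_lcm_mono (l : list Z) y y' : (y | y') ->
  (fold_right Z.lcm y l | fold_right Z.lcm y' l).
Proof.
  induction l as [|x l IH]; intro H; cbn [fold_right]; [exact H|].
  apply Z.lcm_least; [apply Z.divide_lcm_l|].
  eapply Z.divide_trans; [apply IH; exact H| apply Z.divide_lcm_r].
Qed.

Lemma fold_mul_init (l : list Z) y : fold_right Z.mul y l = fold_right Z.mul 1 l * y.
Proof. induction l as [|x l IH]; cbn [fold_right]; [ring| rewrite IH; ring]. Qed.

Lemma lcmR_last Rs a k : (lcmR Rs a k | lcmR Rs a (S k)).
Proof.
  unfold lcmR. rewrite (seq_S (S k)), map_app, fold_right_app.
  apply fold_lcm_mono. apply Z.divide_1_l.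
Qed.

Lemma prodR_last Rs a k : prodR Rs a (S k) = prodR Rs a k * Rs (a + S k)%nat.
Proof.
  unfold prodR. rewrite (seq_S (S k)), map_app, fold_right_app.
  rewrite fold_mul_init. simpl. ring.
Qed.

Lemma main_div (P Q : Z) (Rs : nat -> Z) (hP : 0 < P) (hQ : Q < 0)
  (hgPQ : Z.gcd P Q = 1) (hgR1Q : Z.gcd (Rs 1%nat) Q = 1)
  (hrec : forall k : nat, Rs (S (S k)) = P * Rs (S k) - Q * Rs k) :
  forall k a, (prodR Rs a k | NN (Z.gcd (Rs 0%nat) (Rs 1%nat)) P Q k * lcmR Rs a k).
Proof.
  set (g := Z.gcd (Rs 0%nat) (Rs 1%nat)).
  induction k as [|k IH]; intro a.
  - unfold prodR, lcmR. cbn [seq map fold_right NN]. rewrite Z.lcm_1_r, Z.mul_1_r, Z.mul_1_l.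
    apply Z.divide_abs_r, Z.divide_refl.
  - set (L := lcmR Rs a (S k)). set (N := NN g P Q k).
    assert (H1 : (prodR Rs a (S k) | Rs (a + S k)%nat * (N * L))).
    { rewrite prodR_last, (Z.mul_comm (Rs _)).
      apply Z.mul_divide_mono_r.
      eapply Z.divide_trans; [apply IH|].
      apply Z.mul_divide_mono_l. apply lcmR_last. }
    assert (H2 : (prodR Rs a (S k) | Rs a * (N * L))).
    { change (prodR Rs a (S k)) with (Rs a * prodR Rs (S a) k).
      apply Z.mul_divide_mono_l.
      eapply Z.divide_trans; [apply IH|].
      apply Z.mul_divide_mono_l. unfold L, lcmR. simpl. apply Z.divide_lcm_r. }
    assert (H3 : (prodR Rs a (S k) | Z.gcd (Rs a * (N * L)) (Rs (a + S k)%nat * (N * L))))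
      by (apply Z.gcd_greatest; assumption).
    rewrite Z.gcd_mul_mono_r in H3.
    assert (H4 : (prodR Rs a (S k) | Z.gcd (Rs a) (Rs (a + S k)%nat) * (N * L))).
    { destruct (Z.abs_eq_or_opp (N * L)) as [E|E]; rewrite E in H3; [exact H3|].
      rewrite Z.mul_opp_r in H3. apply (proj1 (Z.divide_opp_r _ _)) in H3. exact H3. }
    eapply Z.divide_trans; [exact H4|].
    change (NN g P Q (S k)) with (g * UU P Q (S k) * N).
    replace (g * UU P Q (S k) * N * L) with ((g * UU P Q (S k)) * (N * L)) by ring.
    apply Z.mul_divide_mono_r. apply (gcd_far P Q Rs hP hQ hgPQ hgR1Q hrec).
Qed.
Open Scope R_scope.

Fixpoint EE (a k : nat) : nat := match k with O => a | S k' => (a + EE (S a) k')%nat end.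
Fixpoint FF (k : nat) : nat := match k with O => O | S k' => (k' + FF k')%nat end.

Lemma EE_closed : forall k a, (2 * EE a k = S k * (2 * a + k))%nat.
Proof. induction k as [|k IH]; intro a; cbn [EE]; [nia|]. rewrite Nat.mul_add_distr_l, IH. nia. Qed.

Lemma FF_closed : forall k, (2 * FF k + k = k * k)%nat.
Proof. induction k as [|k IH]; cbn [FF]; [nia|]. nia. Qed.

Lemma arith1 a k n : ((n = 2*a+2 /\ k = a) \/ (n = 2*a+1 /\ a = S k))%nat ->
  (FF k <= EE a k /\ n * n <= 4 * (EE a k - FF k) + 2 * n + 7)%nat.
Proof.
  intro H. assert (HE := EE_closed k a). assert (HF := FF_closed k).
  assert (Hle : (FF k <= EE a k)%nat) by nia.
  split; [exact Hle|].
  destruct (Nat.le_exists_sub _ _ Hle) as [s [Hs _]]. rewrite Hs, Nat.add_sub.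
  rewrite Hs in HE. clear Hs Hle.
  destruct H as [[-> ->]|[-> ->]]; nia.
Qed.

Lemma ab_facts (P Q : Z) (alpha beta : R) (hP : (0 < P)%Z) (hQ : (Q < 0)%Z)
  (hroots : forall x : R, x ^ 2 - IZR P * x + IZR Q = (x - alpha) * (x - beta))
  (habs : Rabs beta <= Rabs alpha) :
  IZR P = alpha + beta /\ IZR Q = alpha * beta /\ 0 < alpha /\ beta < 0 /\ 1 - beta <= alpha.
Proof.
  assert (H0 := hroots 0). assert (H1 := hroots 1).
  assert (HQ : IZR Q = alpha * beta) by (simpl in H0; lra).
  assert (HP : IZR P = alpha + beta) by (simpl in H1; nra).
  assert (hP' : 1 <= IZR P) by (apply IZR_le; lia).
  assert (hQ' : IZR Q < 0) by (apply IZR_lt; lia).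
  assert (Hab : alpha * beta < 0) by lra.
  destruct (Rlt_or_le 0 alpha) as [Ha|Ha].
  - assert (Hb : beta < 0) by nra. repeat split; try lra.
  - exfalso. assert (Ha' : alpha < 0) by (destruct Ha; [lra| subst; nra]).
    assert (Hb : 0 < beta) by nra.
    rewrite (Rabs_left alpha) in habs by lra. rewrite (Rabs_right beta) in habs by lra. lra.
Qed.

Lemma R_ident_real (P Q : Z) (Rs : nat -> Z) (alpha beta : R)
  (hrec : forall k : nat, Rs (S (S k)) = (P * Rs (S k) - Q * Rs k)%Z)
  (HP : IZR P = alpha + beta) (HQ : IZR Q = alpha * beta) :
  forall i, IZR (Rs (S i)) - beta * IZR (Rs i) = alpha ^ i * (IZR (Rs 1%nat) - beta * IZR (Rs 0%nat)).
Proof.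
  induction i as [|i IH]; [simpl; ring|].
  rewrite hrec, minus_IZR, !mult_IZR, HP, HQ.
  replace (alpha ^ S i * (IZR (Rs 1%nat) - beta * IZR (Rs 0%nat))) with
    (alpha * (alpha ^ i * (IZR (Rs 1%nat) - beta * IZR (Rs 0%nat)))) by (simpl; ring).
  rewrite <- IH. ring.
Qed.

Lemma U_ident_real (P Q : Z) (alpha beta : R)
  (HP : IZR P = alpha + beta) (HQ : IZR Q = alpha * beta) :
  forall i, IZR (UU P Q (S i)) - beta * IZR (UU P Q i) = alpha ^ i.
Proof.
  induction i as [|i IH]; [simpl; ring|].
  change (UU P Q (S (S i))) with (P * UU P Q (S i) - Q * UU P Q i)%Z.
  rewrite minus_IZR, !mult_IZR, HP, HQ. cbn [pow]. rewrite <- IH. ring.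
Qed.

Lemma R_lower (P Q : Z) (Rs : nat -> Z) (alpha beta : R) (hP : (0 < P)%Z) (hQ : (Q < 0)%Z)
  (hR0 : (0 < Rs 0%nat)%Z) (hR1 : (0 < Rs 1%nat)%Z)
  (hrec : forall k : nat, Rs (S (S k)) = (P * Rs (S k) - Q * Rs k)%Z)
  (HP : IZR P = alpha + beta) (HQ : IZR Q = alpha * beta) (Ha : 0 < alpha) (Hb : beta < 0)
  (Hab : 1 - beta <= alpha) :
  forall j, (IZR (Rs 1%nat) - beta * IZR (Rs 0%nat)) * alpha ^ j <= IZR (Rs (S (S j))).
Proof.
  intro j.
  assert (E := R_ident_real P Q Rs alpha beta hrec HP HQ (S j)).
  assert (M : IZR (Rs (S j)) <= IZR (Rs (S (S j)))) by (apply IZR_le; apply (R_mono P Q Rs); auto).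
  assert (Pp : 0 < IZR (Rs (S j))) by (apply IZR_lt; apply (R_pos P Q Rs hP hQ hR0 hR1 hrec j)).
  assert (Ap : 0 < alpha ^ j) by (apply pow_lt; lra).
  assert (Key : alpha * ((IZR (Rs 1%nat) - beta * IZR (Rs 0%nat)) * alpha ^ j) <= alpha * IZR (Rs (S (S j)))).
  { replace (alpha * ((IZR (Rs 1%nat) - beta * IZR (Rs 0%nat)) * alpha ^ j)) with
      (alpha ^ S j * (IZR (Rs 1%nat) - beta * IZR (Rs 0%nat))) by (simpl; ring).
    rewrite <- E. nra. }
  apply Rmult_le_reg_l with alpha; lra.
Qed.

Lemma U_upper (P Q : Z) (alpha beta : R) (hP : (0 < P)%Z) (hQ : (Q < 0)%Z)
  (HP : IZR P = alpha + beta) (HQ : IZR Q = alpha * beta) (Hb : beta < 0) :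
  forall j, IZR (UU P Q (S j)) <= alpha ^ j.
Proof.
  intro j. assert (E := U_ident_real P Q alpha beta HP HQ j).
  assert (U0 : 0 <= IZR (UU P Q j)).
  { apply IZR_le. destruct j; [simpl; lia|]. destruct (U_pos P Q hP hQ j); lia. }
  nra.
Qed.

Lemma prod_lower (P Q : Z) (Rs : nat -> Z) (alpha beta : R) (hP : (0 < P)%Z) (hQ : (Q < 0)%Z)
  (hR0 : (0 < Rs 0%nat)%Z) (hR1 : (0 < Rs 1%nat)%Z)
  (hrec : forall k : nat, Rs (S (S k)) = (P * Rs (S k) - Q * Rs k)%Z)
  (HP : IZR P = alpha + beta) (HQ : IZR Q = alpha * beta) (Ha : 0 < alpha) (Hb : beta < 0)
  (Hab : 1 - beta <= alpha) :
  forall k a, (IZR (Rs 1%nat) - beta * IZR (Rs 0%nat)) ^ (S k) * alpha ^ (EE a k)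
     <= IZR (prodR Rs (S (S a)) k).
Proof.
  set (c := IZR (Rs 1%nat) - beta * IZR (Rs 0%nat)).
  assert (Hc : 0 < c).
  { unfold c. assert (0 < IZR (Rs 1%nat)) by (apply IZR_lt; lia).
    assert (0 < IZR (Rs 0%nat)) by (apply IZR_lt; lia). nra. }
  induction k as [|k IH]; intro a.
  - unfold prodR. cbn [seq map fold_right EE]. rewrite Z.mul_1_r.
    assert (H := R_lower P Q Rs alpha beta hP hQ hR0 hR1 hrec HP HQ Ha Hb Hab a).
    fold c in H. simpl pow. lra.
  - change (prodR Rs (S (S a)) (S k)) with (Rs (S (S a)) * prodR Rs (S (S (S a))) k)%Z.
    rewrite mult_IZR. cbn [EE]. rewrite pow_add.
    replace (c ^ S (S k) * (alpha ^ a * alpha ^ EE (S a) k)) with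
      ((c * alpha ^ a) * (c ^ S k * alpha ^ EE (S a) k)) by (simpl; ring).
    apply Rmult_le_compat.
    + apply Rmult_le_pos; [lra| apply pow_le; lra].
    + apply Rmult_le_pos; apply pow_le; lra.
    + apply (R_lower P Q Rs alpha beta hP hQ hR0 hR1 hrec HP HQ Ha Hb Hab a).
    + apply (IH (S a)).
Qed.

Lemma NN_pos (g P Q : Z) (hg : (0 < g)%Z) (hP : (0 < P)%Z) (hQ : (Q < 0)%Z) :
  forall k, (0 < NN g P Q k)%Z.
Proof.
  induction k as [|k IH]; cbn [NN]; [lia|].
  destruct (U_pos P Q hP hQ k). nia.
Qed.

Lemma NN_upper (g P Q : Z) (alpha beta : R) (hg : (0 < g)%Z) (hP : (0 < P)%Z) (hQ : (Q < 0)%Z)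
  (HP : IZR P = alpha + beta) (HQ : IZR Q = alpha * beta) (Ha : 0 < alpha) (Hb : beta < 0) :
  forall k, IZR (NN g P Q k) <= IZR g ^ k * alpha ^ (FF k).
Proof.
  assert (Hg : 0 < IZR g) by (apply IZR_lt; lia).
  induction k as [|k IH]; cbn [NN FF]; [simpl; lra|].
  rewrite !mult_IZR, pow_add.
  replace (IZR g ^ S k * (alpha ^ k * alpha ^ FF k)) with
    ((IZR g * alpha ^ k) * (IZR g ^ k * alpha ^ FF k)) by (simpl; ring).
  assert (U1 : 1 <= IZR (UU P Q (S k))) by (apply IZR_le; destruct (U_pos P Q hP hQ k); lia).
  assert (N0 : 0 < IZR (NN g P Q k)) by (apply IZR_lt; apply NN_pos; auto).
  apply Rmult_le_compat.
  - apply Rmult_le_pos; lra.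
  - lra.
  - apply Rmult_le_compat_l; [lra|]. apply (U_upper P Q alpha beta hP hQ HP HQ Hb).
  - exact IH.
Qed.

Lemma fold_lcm_div_init (l : list Z) y : (y | fold_right Z.lcm y l)%Z.
Proof.
  induction l as [|x l IH]; cbn [fold_right]; [apply Z.divide_refl|].
  eapply Z.divide_trans; [exact IH| apply Z.divide_lcm_r].
Qed.

Lemma fold_lcm_pos (Rs : nat -> Z) (Hpos : forall i, (0 < Rs i)%Z) :
  forall len m, (0 < fold_right Z.lcm 1%Z (map Rs (seq m len)))%Z.
Proof.
  induction len as [|len IH]; intro m; cbn [seq map fold_right]; [lia|].
  assert (H1 := Z.lcm_nonneg (Rs m) (fold_right Z.lcm 1%Z (map Rs (seq (S m) len)))).
  assert (H2 : Z.lcm (Rs m) (fold_right Z.lcm 1%Z (map Rs (seq (S m) len))) <> 0%Z).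
  { intro H. apply Z.lcm_eq_0 in H. destruct H as [H|H]; [specialize (Hpos m)| specialize (IH (S m))]; lia. }
  lia.
Qed.

Theorem theorem3 (P Q : Z) (Rs : nat -> Z) (alpha beta : R)
  (hP : (0 < P)%Z) (hQ : (Q < 0)%Z)
  (hR0 : (0 < Rs 0%nat)%Z) (hR1 : (0 < Rs 1%nat)%Z)
  (hgPQ : Z.gcd P Q = 1%Z) (hgR1Q : Z.gcd (Rs 1%nat) Q = 1%Z)
  (hrec : forall k : nat, Rs (S (S k)) = (P * Rs (S k) - Q * Rs k)%Z)
  (hroots : forall x : R, x ^ 2 - IZR P * x + IZR Q = (x - alpha) * (x - beta))
  (habs : Rabs beta <= Rabs alpha)
  (n m : nat) (hn : (2 <= n)%nat) (hm1 : (1 <= m)%nat)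
  (hm2 : (m <= (n + 1) / 2 + 1)%nat) :
  IZR (lcm_range Rs m n) >=
    IZR (Z.gcd (Rs 0%nat) (Rs 1%nat))
    * Rpower ((IZR (Rs 1%nat) + IZR (Rs 0%nat) * Rabs beta)
              / IZR (Z.gcd (Rs 0%nat) (Rs 1%nat)))
             ((INR n - 1) / 2)
    * Rpower alpha (INR n ^ 2 / 4 - INR n / 2 - 7 / 4).
Proof.
  destruct (ab_facts P Q alpha beta hP hQ hroots habs) as [HP [HQ [Ha [Hb Hab]]]].
  rewrite (Rabs_left beta) by exact Hb.
  set (g := Z.gcd (Rs 0%nat) (Rs 1%nat)).
  assert (Hpos : forall i, (0 < Rs i)%Z) by (intro i; apply (R_pos P Q Rs hP hQ hR0 hR1 hrec i)).
  assert (hg : (0 < g)%Z).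
  { assert (H := Z.gcd_nonneg (Rs 0%nat) (Rs 1%nat)).
    assert (g <> 0%Z) by (intro H0; apply Z.gcd_eq_0_r in H0; lia). fold g in H. lia. }
  assert (hgR1 : (g <= Rs 1%nat)%Z) by (apply Z.divide_pos_le; [lia| apply Z.gcd_divide_r]).
  set (h := ((n + 1) / 2)%nat).
  assert (Hh : (n = 2 * h \/ n + 1 = 2 * h)%nat).
  { assert (H := Nat.div_mod (n + 1) 2). assert (H' := Nat.mod_upper_bound (n + 1) 2).
    fold h in H. lia. }
  assert (Hh1 : (1 <= h)%nat) by lia.
  set (a := (h - 1)%nat).
  set (k := (n - S (S a))%nat).
  assert (Hn : n = (S (S a) + k)%nat) by lia.
  set (S0 := (EE a k - FF k)%nat).
  assert (Hcase : ((n = 2*a+2 /\ k = a) \/ (n = 2*a+1 /\ a = S k))%nat) by lia.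
  destruct (arith1 a k n Hcase) as [Hle Hbig]. fold S0 in Hbig.
  assert (HEF : EE a k = (S0 + FF k)%nat) by (unfold S0; lia).
  assert (Hk : (n <= 2 * k + 3)%nat) by lia.
  set (L0 := lcmR Rs (S (S a)) k).
  assert (HL : (L0 <= lcm_range Rs m n)%Z).
  { apply Z.divide_pos_le.
    - unfold lcm_range. apply fold_lcm_pos; exact Hpos.
    - unfold lcm_range, L0, lcmR.
      replace (S n - m)%nat with ((S (S a) - m) + S k)%nat by lia.
      rewrite seq_app, map_app, fold_right_app.
      replace (m + (S (S a) - m))%nat with (S (S a)) by lia.
      apply fold_lcm_div_init. }
  assert (HL0 : (0 < L0)%Z) by (unfold L0, lcmR; apply fold_lcm_pos; exact Hpos).
  assert (HD := main_div P Q Rs hP hQ hgPQ hgR1Q hrec k (S (S a))). fold g in HD. fold L0 in HD.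
  assert (HNp := NN_pos g P Q hg hP hQ k).
  assert (HD' : (prodR Rs (S (S a)) k <= NN g P Q k * L0)%Z)
    by (apply Z.divide_pos_le; [nia| exact HD]).
  apply IZR_le in HD'. rewrite mult_IZR in HD'.
  assert (HPr := prod_lower P Q Rs alpha beta hP hQ hR0 hR1 hrec HP HQ Ha Hb Hab k a).
  assert (HNu := NN_upper g P Q alpha beta hg hP hQ HP HQ Ha Hb k).
  set (c := IZR (Rs 1%nat) - beta * IZR (Rs 0%nat)) in HPr.
  assert (Hc : c = IZR (Rs 1%nat) + IZR (Rs 0%nat) * - beta) by (unfold c; ring).
  rewrite <- Hc.
  set (G := IZR g).
  assert (HG : 0 < G) by (apply IZR_lt; exact hg).
  set (x := c / G).
  assert (Hx1 : 1 <= x).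
  { unfold x. apply Rmult_le_reg_r with G; [exact HG|].
    unfold Rdiv. rewrite Rmult_assoc, Rinv_l by lra. rewrite Rmult_1_r, Rmult_1_l.
    unfold c, G. apply IZR_le in hgR1. assert (0 < IZR (Rs 0%nat)) by (apply IZR_lt; lia). nra. }
  assert (HcG : c = x * G) by (unfold x; field; lra).
  set (T := G * x ^ S k * alpha ^ S0).
  assert (HT : T <= IZR L0).
  { assert (HA : 0 < G ^ k * alpha ^ FF k) by (apply Rmult_lt_0_compat; apply pow_lt; lra).
    apply Rmult_le_reg_r with (G ^ k * alpha ^ FF k); [exact HA|].
    assert (E1 : T * (G ^ k * alpha ^ FF k) = c ^ S k * alpha ^ EE a k).
    { unfold T. rewrite HEF, pow_add, HcG, Rpow_mult_distr. simpl. ring. }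
    rewrite E1.
    assert (0 <= IZR L0) by (apply IZR_le; lia).
    apply Rle_trans with (IZR (NN g P Q k) * IZR L0); [lra|].
    apply Rle_trans with (IZR L0 * IZR (NN g P Q k)); [lra|].
    apply Rmult_le_compat_l; [lra| exact HNu]. }
  apply IZR_le in HL.
  apply Rle_ge. apply Rle_trans with T; [|lra].
  unfold T. rewrite Rmult_assoc, Rmult_assoc. apply Rmult_le_compat_l; [lra|].
  assert (Hal : 1 <= alpha) by lra.
  apply Rmult_le_compat.
  - unfold Rpower. left. apply exp_pos.
  - unfold Rpower. left. apply exp_pos.
  - rewrite <- Rpower_pow by lra. apply Rle_Rpower; [exact Hx1|].
    apply le_INR in Hk. rewrite plus_INR, mult_INR in Hk. rewrite S_INR.
    assert (I2 : INR 2 = 2) by (simpl; lra). assert (I3 : INR 3 = 3) by (simpl; lra).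
    rewrite I2, I3 in Hk. revert Hk; generalize (INR k) (INR n); intros; lra.
  - rewrite <- (Rpower_pow S0 alpha) by lra. apply Rle_Rpower; [exact Hal|].
    apply le_INR in Hbig. rewrite !plus_INR, !mult_INR in Hbig.
    assert (I2 : INR 2 = 2) by (simpl; lra). assert (I4 : INR 4 = 4) by (simpl; lra).
    assert (I7 : INR 7 = 7) by (simpl; lra).
    rewrite I2, I4, I7 in Hbig. simpl pow. revert Hbig; generalize (INR S0) (INR n); intros; lra.
Qed.
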